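(* Let $G=(V,E)$ be a chain graph. An edge $e\in E$ is chain-safe (i.e., $G-e$ is a chain graph) if and only if $e$ is not the middle edge of an induced $P_4$ in $G$.
   Context: A chain graph is a bipartite graph whose vertex set can be partitioned into two independent sets $X,Y$ such that the neighborhoods of the vertices of $X$ are linearly ordered by inclusion. The middle edge of a path $P_4$ is the edge joining its two degree-2 vertices. *)

(* Defs.v *)
(* A finite simple graph is a symmetric irreflexive
   relation g : rel T on a finType T. *)
From mathcomp Require Import all_boot.
Set Implicit Arguments. Unset Strict Implicit. Unset Printing Implicit Defensive.

Section Graphs.
Variable T : finType.

Definition nbhd (g : rel T) (x : T) : {set T} := [set y | g x y].

Definition independent (g : rel T) (A : {set T}) : Prop :=
  forall x y, x \in A -> y \in A -> ~~ g x y.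

Definition chain_graph (g : rel T) : Prop :=
  exists X Y : {set T},
    [/\ X :&: Y = set0, X :|: Y = setT, independent g X, independent g Y &
        forall x1 x2, x1 \in X -> x2 \in X ->
          (nbhd g x1 \subset nbhd g x2) \/ (nbhd g x2 \subset nbhd g x1)].

Definition del_edge (g : rel T) (u v : T) : rel T :=
  fun x y => g x y && ~~ (((x == u) && (y == v)) || ((x == v) && (y == u))).

Definition induced_P4 (g : rel T) (a b c d : T) : Prop :=
  [/\ uniq [:: a; b; c; d],
      g a b && g b c && g c d &
      ~~ g a c && ~~ g b d && ~~ g a d].

Definition middle_edge_of_induced_P4 (g : rel T) (u v : T) : Prop :=
  exists a b c d, induced_P4 g a b c d /\
    ((b = u /\ c = v) \/ (b = v /\ c = u)).

End Graphs.

(* Main.v *)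
Require Import Defs.
From mathcomp Require Import all_boot.

Section Aux.
Variable T : finType.

Lemma part_mem (X Y : {set T}) x : X :|: Y = setT -> x \in X \/ x \in Y.
Proof. move=> H; have : x \in X :|: Y by rewrite H inE. by rewrite inE => /orP. Qed.

Lemma part_disj (X Y : {set T}) x : X :&: Y = set0 -> x \in X -> x \in Y -> False.
Proof. move=> H hx hy; have : x \in X :&: Y by rewrite inE hx hy. by rewrite H inE. Qed.

Lemma del_edgeC (g : rel T) u v x y : del_edge g u v x y = del_edge g v u x y.
Proof. by rewrite /del_edge orbC. Qed.

Lemma no2K2 (h : rel T) (hs : symmetric h) X Y :
  X :&: Y = set0 -> X :|: Y = setT -> independent h X -> independent h Y ->
  (forall x1 x2, x1 \in X -> x2 \in X ->
     (nbhd h x1 \subset nbhd h x2) \/ (nbhd h x2 \subset nbhd h x1)) ->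
  forall a b c d, h a b -> h c d -> ~~ h a c -> ~~ h a d -> ~~ h b c -> ~~ h b d -> False.
Proof.
move=> HI HU iX iY Hn.
have L : forall x1 y1 x2 y2, x1 \in X -> x2 \in X -> h x1 y1 -> h x2 y2 ->
   ~~ h x1 y2 -> ~~ h x2 y1 -> False.
  move=> x1 y1 x2 y2 h1 h2 e1 e2 n1 n2.
  case: (Hn _ _ h1 h2) => /subsetP S.
  - by move: (S y1); rewrite !inE e1 (negbTE n2) => /(_ isT).
  - by move: (S y2); rewrite !inE e2 (negbTE n1) => /(_ isT).
have side : forall p q, h p q -> (p \in X) \/ (q \in X /\ h q p).
  move=> p q hpq; case: (part_mem _ _ p HU) => hp; first by left.
  case: (part_mem _ _ q HU) => hq; first by right; rewrite hs.
  by move: (iY _ _ hp hq); rewrite hpq.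
move=> a b c d hab hcd nac nad nbc nbd.
case: (side _ _ hab) => [ha|[hb hba]]; case: (side _ _ hcd) => [hc|[hd hdc]].
- by apply: (L a b c d) => //; rewrite hs.
- by apply: (L a b d c) => //; rewrite hs.
- by apply: (L b a c d) => //; rewrite hs.
- by apply: (L b a d c) => //; rewrite hs.
Qed.

Lemma nest (g : rel T) (gs : symmetric g) (gi : irreflexive g) X Y u v :
  X :&: Y = set0 -> X :|: Y = setT -> independent g X -> independent g Y ->
  (forall x1 x2, x1 \in X -> x2 \in X ->
     (nbhd g x1 \subset nbhd g x2) \/ (nbhd g x2 \subset nbhd g x1)) ->
  u \in X -> v \in Y -> g u v ->
  (forall a d, ~ induced_P4 g a u v d) ->
  forall x1 x2, x1 \in X -> x2 \in X ->
     (nbhd (del_edge g u v) x1 \subset nbhd (del_edge g u v) x2) \/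
     (nbhd (del_edge g u v) x2 \subset nbhd (del_edge g u v) x1).
Proof.
move=> HI HU iX iY Hn uX vY guv noP.
have nuv : u != v by apply/eqP => E; move: (gi u); rewrite {2}E guv.
have NU : nbhd (del_edge g u v) u = nbhd g u :\ v.
  apply/setP => y; rewrite !inE /del_edge eqxx /= (negbTE nuv) /= orbF andbC.
  by [].
have NX : forall x, x \in X -> x != u -> nbhd (del_edge g u v) x = nbhd g x.
  move=> x xX xu; have xv : x != v by apply/eqP => E; subst x; apply: (part_disj _ _ _ HI xX vY).
  by apply/setP => y; rewrite !inE /del_edge (negbTE xu) (negbTE xv) /= andbT.
have C : forall x, x \in X -> x != u ->
   (nbhd g u :\ v \subset nbhd g x) \/ (nbhd g x \subset nbhd g u :\ v).
  move=> x xX xu.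
  case: (Hn _ _ uX xX) => S.
  - by left; apply: subset_trans S; apply: subD1set.
  - case vx: (v \in nbhd g x).
    + case: (boolP (nbhd g u :\ v \subset nbhd g x)) => [Hs|/subsetPn [w]]; first by left.
      rewrite !inE => /andP [wv guw] ngxw; exfalso; apply: (noP w x).
      have wX : w \notin X by apply/negP => wX; move: (iX _ _ uX wX); rewrite guw.
      have wY : w \in Y by case: (part_mem _ _ w HU) => //; rewrite (negbTE wX).
      have wu : w != u by apply/eqP => E; subst w; rewrite uX in wX.
      have wx : w != x by apply/eqP => E; subst w; rewrite xX in wX.
      have vx' : v != x by apply/eqP => E; subst x; apply: (part_disj _ _ _ HI xX vY).
      move: vx; rewrite inE => gxv.
      split.
      * by rewrite /= !inE !negb_or wu wv wx nuv vx' (eq_sym u x) xu.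
      * by rewrite gs guw guv gs gxv.
      * by rewrite (iY _ _ wY vY) (iX _ _ uX xX) gs ngxw.
    + by right; rewrite subsetD1 S inE; move/negbT: vx; rewrite inE.
move=> x1 x2 h1 h2.
case: (eqVneq x1 u) => [->|n1]; case: (eqVneq x2 u) => [->|n2].
- by left.
- by rewrite NU (NX _ h2 n2); apply: C.
- by rewrite NU (NX _ h1 n1); case: (C _ h1 n1); [right|left].
- by rewrite (NX _ h1 n1) (NX _ h2 n2); apply: Hn.
Qed.

End Aux.

Theorem lemma4p5 (T : finType) (g : rel T) (g_sym : symmetric g)
    (g_irr : irreflexive g) (hchain : chain_graph g) (u v : T) (huv : g u v) :
  chain_graph (del_edge g u v) <-> ~ middle_edge_of_induced_P4 g u v.
Proof.
split.
- move=> [X [Y [HI HU iX iY Hn]]] [a [b [c [d [[Hu Hg Hn'] Hbc]]]]].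
  have hs : symmetric (del_edge g u v).
    by move=> x y; rewrite /del_edge g_sym [_ || _]orbC (andbC (x==v)) (andbC (x==u)).
  move: Hu; rewrite /= !inE !negb_or !andbT => /andP [/and3P [ab ac ad] /andP [/andP [bc bd] cd]].
  move: Hg => /andP [/andP [gab gbc] gcd].
  move: Hn' => /andP [/andP [nac nbd] nad].
  have E : forall x y, ~~ g x y -> ~~ del_edge g u v x y.
    by move=> x y; apply: contra; rewrite /del_edge => /andP [].
  apply: (@no2K2 T (del_edge g u v) hs X Y HI HU iX iY Hn a b c d).
  all: try exact: E.
  1-3: case: Hbc => [[Eb Ec]|[Eb Ec]]; subst b c; rewrite /del_edge ?eqxx /=.
  all: try by rewrite ?orbT ?andbF.
  all: try by rewrite (eq_sym d u) (eq_sym d v) ?(negbTE bd) ?(negbTE cd) ?gcd /= ?andbF ?orbF.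
  all: try by rewrite ?(negbTE ab) ?(negbTE ac) ?(negbTE bd) ?(negbTE cd) ?(eq_sym d) ?(negbTE bd) ?(negbTE cd) /= ?andbT.
- move=> nm; case: hchain => X [Y [HI HU iX iY Hn]]; exists X, Y; split => //.
  + move=> x y hx hy; rewrite /del_edge; by move: (iX x y hx hy) => /negbTE ->.
  + move=> x y hx hy; rewrite /del_edge; by move: (iY x y hx hy) => /negbTE ->.
  + case: (part_mem _ _ _ u HU) => uX.
    * have vY : v \in Y.
        case: (part_mem _ _ _ v HU) => // vX; by move: (iX _ _ uX vX); rewrite huv.
      apply: (@nest T g g_sym g_irr X Y u v HI HU iX iY Hn uX vY huv).
      by move=> a d P; apply: nm; exists a, u, v, d; split => //; left.
    * have vX : v \in X.
        case: (part_mem _ _ _ v HU) => // vY; by move: (iY _ _ uX vY); rewrite huv.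
      have NE : forall x, nbhd (del_edge g u v) x = nbhd (del_edge g v u) x.
        by move=> x; apply/setP => y; rewrite !inE del_edgeC.
      move=> x1 x2 h1 h2; rewrite !NE.
      apply: (@nest T g g_sym g_irr X Y v u HI HU iX iY Hn vX uX _ _ x1 x2 h1 h2).
      - by rewrite g_sym.
      - by move=> a d P; apply: nm; exists a, v, u, d; split => //; right.
Qed.
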